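(* If $f\in C^2(\mathbb T,\mathbb R)$ is non-degenerate, then $$\mathcal H^0(\{f=0\})=\frac1\pi\int_0^{2\pi}\frac{f'(x)^2-f(x)f''(x)}{f(x)^2+f'(x)^2}\,dx .$$
   Context: $\mathbb T=\mathbb R/2\pi\mathbb Z$, functions on $\mathbb T$ are identified with $2\pi$-periodic functions on $\mathbb R$, and $\mathcal H^0(\{f=0\})$ is the number of zeros of $f$ in one period $[0,2\pi)$. $f$ is non-degenerate if $\min_x\sqrt{f(x)^2+f'(x)^2}>0$. *)

(* Defs.v *)
From Stdlib Require Import Reals Lra List.
From Coquelicot Require Import Coquelicot.
Open Scope R_scope.

Definition zero_set_card (f : R -> R) (n : nat) : Prop :=
  exists l : list R, NoDup l /\ length l = n /\
    (forall x, In x l <-> (0 <= x < 2 * PI /\ f x = 0)).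

Definition C2_periodic (f : R -> R) : Prop :=
  (forall x, f (x + 2 * PI) = f x) /\
  (forall x, ex_derive f x) /\
  (forall x, ex_derive (Derive f) x) /\
  (forall x, continuous (Derive (Derive f)) x).

(* Non-degenerate: min_x sqrt(f^2 + f'^2) > 0 (the min exists by continuity
   and periodicity, so this is: a positive lower bound exists). *)
Definition non_degenerate (f : R -> R) : Prop :=
  exists c, 0 < c /\ forall x, c <= sqrt (f x ^ 2 + Derive f x ^ 2).

(* Main.v *)
Require Import Defs.
From Stdlib Require Import Reals Lra List Classical.
From Coquelicot Require Import Coquelicot.
Open Scope R_scope.

Definition Fi (f : R -> R) (x : R) :=
  (Derive f x ^ 2 - f x * Derive (Derive f) x) / (f x ^ 2 + Derive f x ^ 2).

Definition Ef (f : R -> R) (x : R) :=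
  if Req_EM_T (f x) 0 then - (PI / 2) else atan (Derive f x / f x).

Lemma Fi_cont f x : ex_derive f x -> ex_derive (Derive f) x ->
  continuous (Derive (Derive f)) x -> f x ^ 2 + Derive f x ^ 2 <> 0 ->
  continuous (Fi f) x.
Proof.
  intros H1 H2 H3 H4.
  pose proof (ex_derive_continuous _ _ H1) as C1.
  pose proof (ex_derive_continuous _ _ H2) as C2.
  apply continuous_ext with (fun y => mult (plus (mult (Derive f y) (Derive f y))
     (opp (mult (f y) (Derive (Derive f) y))))
     (/ (plus (mult (f y) (f y)) (mult (Derive f y) (Derive f y))))).
  { intros y; unfold Fi, mult, plus, opp; simpl. unfold Rdiv. f_equal; try ring.
    f_equal; ring. }
  apply (continuous_mult (K:=R_AbsRing)).
  - apply (continuous_plus (V:=R_NormedModule)). apply (continuous_mult (K:=R_AbsRing)); auto.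
    apply (continuous_opp (V:=R_NormedModule)). apply (continuous_mult (K:=R_AbsRing)); auto.
  - apply (continuous_Rinv_comp (fun y => plus (mult (f y) (f y)) (mult (Derive f y) (Derive f y)))).
    apply (continuous_plus (V:=R_NormedModule)); apply (continuous_mult (K:=R_AbsRing)); auto.
    unfold plus, mult; simpl. intro E; apply H4. rewrite <- E. ring.
Qed.

Lemma deriv_A f x : ex_derive f x -> ex_derive (Derive f) x -> Derive f x <> 0 ->
  is_derive (fun y => atan (f y / Derive f y)) x (Fi f x).
Proof.
  intros H1 H2 H3.
  pose proof (is_derive_div f (Derive f) x _ _ (Derive_correct f x H1) (Derive_correct _ x H2) H3) as D1.
  pose proof (is_derive_comp atan (fun y => f y / Derive f y) x _ _ (is_derive_atan _) D1) as D2.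
  revert D2. match goal with |- is_derive _ _ ?v -> _ => replace v with (Fi f x) end. auto.
  unfold Fi, scal; simpl; unfold mult; simpl; unfold Rsqr.
  assert (0 < Derive f x ^ 2) by (apply pow2_gt_0; auto).
  assert (0 <= f x ^ 2) by (apply pow2_ge_0).
  field. split; [auto|nra].
Qed.

Lemma deriv_B f x : ex_derive f x -> ex_derive (Derive f) x -> f x <> 0 ->
  is_derive (fun y => - atan (Derive f y / f y)) x (Fi f x).
Proof.
  intros H1 H2 H3.
  pose proof (is_derive_div (Derive f) f x _ _ (Derive_correct _ x H2) (Derive_correct f x H1) H3) as D1.
  pose proof (is_derive_opp _ _ _ (is_derive_comp atan (fun y => Derive f y / f y) x _ _ (is_derive_atan _) D1)) as D2.
  revert D2. match goal with |- is_derive _ _ ?v -> _ => replace v with (Fi f x) end. auto.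
  unfold Fi, scal, opp; simpl; unfold mult; simpl; unfold Rsqr.
  assert (0 < f x ^ 2) by (apply pow2_gt_0; auto).
  assert (0 <= Derive f x ^ 2) by (apply pow2_ge_0).
  field. split; [auto|nra].
Qed.

Lemma abs_sq u k : Rabs u <= k -> u * u <= k * k.
Proof. unfold Rabs; destruct (Rcase_abs u); nra. Qed.

Lemma abs_sq2 u k : 0 <= k -> k <= Rabs u -> k * k <= u * u.
Proof. unfold Rabs; destruct (Rcase_abs u); nra. Qed.

Lemma between_ab a b z x xi : a <= z <= b -> a <= x <= b ->
  Rmin z x <= xi <= Rmax z x -> a <= xi <= b.
Proof.
  intros H1 H2 [H3 H4]. split.
  - eapply Rle_trans; [|exact H3]. apply Rmin_glb; lra.
  - eapply Rle_trans; [exact H4|]. apply Rmax_lub; lra.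
Qed.

Lemma mvt_der (u : R -> R) (z x : R) :
  (forall y, ex_derive u y) ->
  exists xi, Rmin z x <= xi <= Rmax z x /\ u x - u z = Derive u xi * (x - z).
Proof.
  intros Hu.
  destruct (MVT_gen u z x (Derive u)) as [xi [H1 H2]].
  - intros y _. apply Derive_correct; auto.
  - intros y _. apply continuity_pt_filterlim. apply (ex_derive_continuous (K:=R_AbsRing) (V:=R_NormedModule)). auto.
  - exists xi; split; auto.
Qed.

Definition Pab (f : R -> R) (a b : R) :=
  exists l : list R, NoDup l /\ (forall x, In x l <-> (a <= x < b /\ f x = 0)) /\
    is_RInt (Fi f) a b (PI * INR (length l) + Ef f a - Ef f b).

Lemma pos_den f c : 0 < c -> (forall x, c <= sqrt (f x ^ 2 + Derive f x ^ 2)) ->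
  forall x, 0 < f x ^ 2 + Derive f x ^ 2.
Proof.
  intros Hc Hnd x. destruct (Rle_or_lt (f x ^ 2 + Derive f x ^ 2) 0) as [H|H]; auto.
  specialize (Hnd x). rewrite sqrt_neg_0 in Hnd; lra.
Qed.

Lemma gz_bound f c z : (forall x, c <= sqrt (f x ^ 2 + Derive f x ^ 2)) -> f z = 0 ->
  c <= Rabs (Derive f z).
Proof.
  intros Hnd Hz. specialize (Hnd z). rewrite Hz in Hnd.
  replace (0 ^ 2 + Derive f z ^ 2) with (Rsqr (Derive f z)) in Hnd by (unfold Rsqr; ring).
  rewrite sqrt_Rsqr_abs in Hnd. auto.
Qed.

Lemma small f c M d :
  (forall y, ex_derive f y) -> (forall y, ex_derive (Derive f) y) ->
  (forall y, continuous (Derive (Derive f)) y) ->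
  0 < c -> (forall x, c <= sqrt (f x ^ 2 + Derive f x ^ 2)) ->
  0 < d -> (forall x, 0 <= x <= 2*PI -> Rabs (Derive (Derive f) x) <= M) -> M * d <= c/2 ->
  forall a b, 0 <= a -> a <= b -> b <= 2*PI -> b - a <= d -> Pab f a b.
Proof.
  intros Hf Hg Hh Hc Hnd Hd HM HMd a b Ha Hab Hb Hba.
  pose proof (pos_den f c Hc Hnd) as Hden.
  assert (Hcont : forall x, continuous (Fi f) x).
  { intros x. apply Fi_cont; auto. specialize (Hden x); lra. }
  destruct (classic (exists z, a <= z <= b /\ f z = 0)) as [[z [Hz Hfz]] | Hno].
  2: {
    assert (Hnz : forall x, a <= x <= b -> f x <> 0).
    { intros x Hx E; apply Hno; exists x; auto. }
    exists nil. split; [constructor|]. split.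
    - intros x; simpl; split; [tauto|]. intros [H1 H2]. apply (Hnz x); [lra|auto].
    - pose proof (is_RInt_derive (fun y => - atan (Derive f y / f y)) (Fi f) a b) as HR.
      rewrite Rmin_left in HR by lra. rewrite Rmax_right in HR by lra.
      assert (HR' := HR (fun x Hx => deriv_B f x (Hf x) (Hg x) (Hnz x Hx)) (fun x _ => Hcont x)).
      unfold Ef. destruct (Req_EM_T (f a) 0) as [E|_]; [exfalso; apply (Hnz a); [lra|auto]|].
      destruct (Req_EM_T (f b) 0) as [E|_]; [exfalso; apply (Hnz b); [lra|auto]|].
      replace (PI * INR (length nil) + atan (Derive f a / f a) - atan (Derive f b / f b))
        with (minus (- atan (Derive f b / f b)) (- atan (Derive f a / f a))); auto.
      unfold minus, plus, opp; simpl; lra. }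
  assert (Hgz := gz_bound f c z Hnd Hfz).
  assert (Hgs : forall x, a <= x <= b -> Derive f x * Derive f z > 0).
  { intros x Hx.
    destruct (mvt_der (Derive f) z x Hg) as [xi [Hxi Eq]].
    assert (Hxi' := between_ab a b z x xi Hz Hx Hxi).
    assert (Hhx := HM xi ltac:(lra)).
    assert (Habs : Rabs (Derive f x - Derive f z) <= c / 2).
    { rewrite Eq, Rabs_mult.
      assert (Rabs (x - z) <= d) by (apply Rabs_le; lra).
      pose proof (Rabs_pos (Derive (Derive f) xi)). pose proof (Rabs_pos (x - z)). nra. }
    apply abs_sq in Habs. apply abs_sq2 in Hgz; [|lra]. nra. }
  assert (Hfs : forall x, a <= x <= b -> (z < x -> f x * Derive f z > 0) /\ (x < z -> f x * Derive f z < 0)).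
  { intros x Hx.
    destruct (mvt_der f z x Hf) as [xi [Hxi Eq]].
    assert (Hxi' := between_ab a b z x xi Hz Hx Hxi).
    assert (G := Hgs xi Hxi'). rewrite Hfz in Eq.
    assert (f x * Derive f z = Derive f xi * Derive f z * (x - z)) by (rewrite <- (Rminus_0_r (f x)), Eq; ring).
    split; intros; nra. }
  assert (Huniq : forall y, a <= y <= b -> f y = 0 -> y = z).
  { intros y Hy E. destruct (Rtotal_order y z) as [L|[L|L]]; auto; exfalso.
    - destruct (Hfs y Hy) as [_ H]. rewrite E in H. specialize (H L). lra.
    - destruct (Hfs y Hy) as [H _]. rewrite E in H. specialize (H L). lra. }
  assert (Hgnz : forall x, a <= x <= b -> Derive f x <> 0).
  { intros x Hx E. specialize (Hgs x Hx). rewrite E in Hgs. lra. }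
  pose proof (is_RInt_derive (fun y => atan (f y / Derive f y)) (Fi f) a b) as HR.
  rewrite Rmin_left in HR by lra. rewrite Rmax_right in HR by lra.
  assert (HR' := HR (fun x Hx => deriv_A f x (Hf x) (Hg x) (Hgnz x Hx)) (fun x _ => Hcont x)).
  clear HR.
  assert (HE1 : forall x, a <= x <= z -> Ef f x = - (PI/2) - atan (f x / Derive f x)).
  { intros x Hx. unfold Ef. destruct (Req_EM_T (f x) 0) as [E|NE].
    - rewrite E. unfold Rdiv. rewrite Rmult_0_l, atan_0. ring.
    - assert (Hxz : x < z).
      { destruct Hx as [_ Hx]. destruct (Rle_lt_or_eq_dec _ _ Hx) as [L|L]; auto.
        subst; contradiction. }
      assert (Hx' : a <= x <= b) by lra.
      destruct (Hfs x Hx') as [_ H1]. specialize (H1 Hxz).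
      assert (H2 := Hgs x Hx'). assert (H3 := Hgnz x Hx').
      assert (H4 : 0 < Derive f z * Derive f z) by nra.
      assert (H5 : f x * Derive f x < 0) by nra.
      set (t := f x / Derive f x).
      assert (H6 : t * (Derive f x * Derive f x) = f x * Derive f x) by (unfold t; field; auto).
      assert (H7 : 0 < Derive f x * Derive f x) by nra.
      assert (Ht : t < 0) by nra.
      replace (Derive f x / f x) with (- / (- t)) by (unfold t; field; auto).
      rewrite atan_opp, atan_inv by lra. rewrite atan_opp. ring. }
  assert (HE2 : forall x, z < x <= b -> Ef f x = PI/2 - atan (f x / Derive f x)).
  { intros x Hx. unfold Ef. destruct (Req_EM_T (f x) 0) as [E|NE].
    - exfalso. assert (x = z) by (apply Huniq; auto; lra). lra.
    - assert (Hx' : a <= x <= b) by lra.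
      destruct (Hfs x Hx') as [H1 _]. specialize (H1 (proj1 Hx)).
      assert (H2 := Hgs x Hx'). assert (H3 := Hgnz x Hx').
      assert (H4 : 0 < Derive f z * Derive f z) by nra.
      assert (H5 : f x * Derive f x > 0) by nra.
      set (t := f x / Derive f x).
      assert (H6 : t * (Derive f x * Derive f x) = f x * Derive f x) by (unfold t; field; auto).
      assert (H7 : 0 < Derive f x * Derive f x) by nra.
      assert (Ht : t > 0) by nra.
      replace (Derive f x / f x) with (/ t) by (unfold t; field; auto).
      rewrite atan_inv by lra. ring. }
  destruct (Rle_lt_or_eq_dec z b (proj2 Hz)) as [Lzb|Lzb].
  - exists (z :: nil). split.
    { constructor; [simpl; tauto | constructor]. }
    split.
    { intros x; simpl; split.
      - intros [E|[]]; subst; split; [lra|auto].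
      - intros [H1 H2]. left. symmetry. apply Huniq; auto; lra. }
    replace (PI * INR (length (z :: nil)) + Ef f a - Ef f b) with
      (minus (atan (f b / Derive f b)) (atan (f a / Derive f a))); auto.
    rewrite (HE1 a) by lra. rewrite (HE2 b) by lra. simpl INR.
    unfold minus, plus, opp; simpl; lra.
  - exists nil. split; [constructor|]. split.
    { intros x; simpl; split; [tauto|]. intros [H1 H2].
      assert (x = z) by (apply Huniq; auto; lra). lra. }
    replace (PI * INR (length nil) + Ef f a - Ef f b) with
      (minus (atan (f b / Derive f b)) (atan (f a / Derive f a))); auto.
    rewrite (HE1 a) by lra. rewrite (HE1 b) by lra. simpl INR.
    unfold minus, plus, opp; simpl; lra.
Qed.

Lemma combine f a m b : a <= m <= b -> Pab f a m -> Pab f m b -> Pab f a b.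
Proof.
  intros Hm [l1 [N1 [I1 R1]]] [l2 [N2 [I2 R2]]].
  exists (l1 ++ l2). split; [|split].
  - apply NoDup_app; auto. intros x H1 H2. apply I1 in H1. apply I2 in H2. lra.
  - intros x. rewrite in_app_iff, I1, I2. split.
    + intros [[H1 H2]|[H1 H2]]; split; auto; lra.
    + intros [H1 H2]. destruct (Rlt_or_le x m); [left|right]; split; auto; lra.
  - pose proof (is_RInt_Chasles _ _ _ _ _ _ R1 R2) as R.
    rewrite length_app, plus_INR.
    replace (PI * (INR (length l1) + INR (length l2)) + Ef f a - Ef f b) with
      (plus (PI * INR (length l1) + Ef f a - Ef f m) (PI * INR (length l2) + Ef f m - Ef f b)); auto.
    unfold plus; simpl; lra.
Qed.

Lemma induct f c M d :
  (forall y, ex_derive f y) -> (forall y, ex_derive (Derive f) y) ->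
  (forall y, continuous (Derive (Derive f)) y) ->
  0 < c -> (forall x, c <= sqrt (f x ^ 2 + Derive f x ^ 2)) ->
  0 < d -> (forall x, 0 <= x <= 2*PI -> Rabs (Derive (Derive f) x) <= M) -> M * d <= c/2 ->
  forall k : nat, forall a b, 0 <= a -> a <= b -> b <= 2*PI -> b - a <= INR k * d -> Pab f a b.
Proof.
  intros Hf Hg Hh Hc Hnd Hd HM HMd k. induction k as [|k IH]; intros a b Ha Hab Hb Hba.
  - apply (small f c M d); auto. simpl in Hba. lra.
  - rewrite S_INR in Hba.
    assert (Hk : 0 <= INR k) by apply pos_INR.
    set (m := Rmin b (a + d)).
    assert (Hm1 : a <= m <= b).
    { unfold m. split; [apply Rmin_glb; lra | apply Rmin_l]. }
    assert (Hm2 : m - a <= d).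
    { unfold m. pose proof (Rmin_r b (a + d)). lra. }
    assert (Hm3 : b - m <= INR k * d).
    { unfold m. destruct (Rle_dec b (a + d)).
      - rewrite Rmin_left by lra. nra.
      - rewrite Rmin_right by lra. lra. }
    apply combine with m; auto.
    + apply (small f c M d); auto; lra.
    + apply IH; lra.
Qed.

Theorem corollary1 (f : R -> R) :
  C2_periodic f -> non_degenerate f ->
  exists n : nat, zero_set_card f n /\
    INR n = / PI * RInt (fun x => (Derive f x ^ 2 - f x * Derive (Derive f) x)
                                 / (f x ^ 2 + Derive f x ^ 2)) 0 (2 * PI).
Proof.
  intros [Hp [Hf [Hg Hh]]] [c [Hc Hnd]].
  assert (HPI := PI_RGT_0).
  destruct (continuity_ab_maj (fun x => Rabs (Derive (Derive f) x)) 0 (2 * PI)) as [Mx [HMx _]].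
  { lra. }
  { intros x _. apply continuity_pt_filterlim.
    apply (continuous_comp (Derive (Derive f)) Rabs); auto. apply continuous_Rabs. }
  set (M := Rabs (Derive (Derive f) Mx)).
  assert (HM0 : 0 <= M) by apply Rabs_pos.
  set (d := c / (2 * (M + 1))).
  assert (Hd : 0 < d) by (unfold d; apply Rdiv_lt_0_compat; lra).
  assert (HMd : M * d <= c / 2).
  { unfold d. apply Rmult_le_reg_r with (2 * (M + 1)); [lra|].
    replace (M * (c / (2 * (M + 1))) * (2 * (M + 1))) with (M * c) by (field; lra).
    replace (c / 2 * (2 * (M + 1))) with (c * M + c) by field. nra. }
  destruct (archimed_cor1 (d / (2 * PI))) as [k [Hk1 Hk2]].
  { apply Rdiv_lt_0_compat; lra. }
  assert (Hk : 2 * PI - 0 <= INR k * d).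
  { assert (0 < INR k) by (apply lt_0_INR; auto).
    apply Rmult_lt_compat_l with (r := INR k * (2 * PI)) in Hk1; [|nra].
    replace (INR k * (2 * PI) * / INR k) with (2 * PI) in Hk1 by (field; lra).
    replace (INR k * (2 * PI) * (d / (2 * PI))) with (INR k * d) in Hk1 by (field; lra).
    lra. }
  destruct (induct f c M d Hf Hg Hh Hc Hnd Hd HMx HMd k 0 (2 * PI)) as [l [N [I R]]]; try lra.
  exists (length l). split.
  - exists l. auto.
  - assert (Hf2 : f (2 * PI) = f 0) by (rewrite <- (Rplus_0_l (2 * PI)); apply Hp).
    assert (Hg2 : Derive f (2 * PI) = Derive f 0).
    { rewrite <- (Derive_ext (fun y => f (y + 2 * PI)) f 0 Hp).
      symmetry. apply is_derive_unique.
      pose proof (is_derive_comp f (fun y => y + 2 * PI) 0 _ 1 (Derive_correct f _ (Hf (0 + 2 * PI)))) as D.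
      rewrite Rplus_0_l in D. 
      replace (Derive f (2 * PI)) with (scal 1 (Derive f (2 * PI))).
      + apply D. auto_derive; auto.
      + unfold scal; simpl; unfold mult; simpl; ring. }
    assert (HE : Ef f 0 = Ef f (2 * PI)) by (unfold Ef; rewrite Hf2, Hg2; auto).
    change (fun x => (Derive f x ^ 2 - f x * Derive (Derive f) x) / (f x ^ 2 + Derive f x ^ 2))
      with (Fi f).
    rewrite (is_RInt_unique _ _ _ _ R). rewrite HE. field. lra.
Qed.
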